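(* Let $A$ be a commutative noetherian local ring, let $x,y\in A$ be an exact pair of zero divisors, and let $a\in A$. (a) If $a$ is weakly regular on $A/(y)$, then $G_a$ is isomorphic to the ideal $(y,a)$ of $A$. (b) If $a$ is weakly regular on $A/(x)$, then $H_a$ is isomorphic to the ideal $(x,a)$ of $A$.
   Context: Two non-units $x,y\in A$ form an exact pair of zero divisors if $\operatorname{Ann}_A(x)=(y)$ and $\operatorname{Ann}_A(y)=(x)$. An element $a\in A$ is weakly regular on a module $M$ if multiplication by $a$ on $M$ is injective. For $a\in A$, let $\gamma_a=\begin{pmatrix} x & a\\ 0 & y\end{pmatrix}$ and $\eta_a=\begin{pmatrix} y & -a\\ 0 & x\end{pmatrix}$, viewed as $A$-linear maps $A^2\to A^2$ acting on column vectors, and set $G_a=\operatorname{Coker}\gamma_a$, $H_a=\operatorname{Coker}\eta_a$. *)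

(* Defs.v *)
From HB Require Import structures.
From mathcomp Require Import all_boot all_algebra.
Set Implicit Arguments. Unset Strict Implicit. Unset Printing Implicit Defensive.
Import GRing.Theory.
Local Open Scope ring_scope.

Section Defs.
Variable A : comUnitRingType.

Definition is_ideal (I : A -> Prop) : Prop :=
  [/\ I 0, (forall u v, I u -> I v -> I (u + v)) & (forall r u, I u -> I (r * u))].

Definition noetherian : Prop :=
  forall I : nat -> A -> Prop,
    (forall n, is_ideal (I n)) ->
    (forall n u, I n u -> I n.+1 u) ->
    exists N, forall n u, (N <= n)%N -> I n u -> I N u.

(* Local ring (A is nontrivial as a comUnitRingType): the non-units are closed
   under addition, i.e. the non-units form the unique maximal ideal. *)
Definition local_ring : Prop :=
  forall u v : A, u \notin GRing.unit -> v \notin GRing.unit ->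
    (u + v) \notin GRing.unit.

Definition pideal (z : A) : A -> Prop := fun w => exists r, w = r * z.
Definition ideal2 (u v : A) : A -> Prop := fun w => exists r s, w = r * u + s * v.

Definition ann_eq (z w : A) : Prop := forall t, t * z = 0 <-> pideal w t.

Definition exact_pair (x y : A) : Prop :=
  [/\ x \notin GRing.unit, y \notin GRing.unit, ann_eq x y & ann_eq y x].

(* a is weakly regular on A/(z): multiplication by a on A/(z) is injective. *)
Definition weakly_regular_mod (a z : A) : Prop :=
  forall t, pideal z (a * t) -> pideal z t.

(* gamma_a = [[x, a], [0, y]] and eta_a = [[y, -a], [0, x]] acting on column vectors *)
Definition mx2 (p q r s : A) : 'M[A]_2 :=
  \matrix_(i, j) if (i == 0 :> nat) then (if (j == 0 :> nat) then p else q)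
                 else (if (j == 0 :> nat) then r else s).
Definition gamma_mx (x y a : A) : 'M[A]_2 := mx2 x a 0 y.
Definition eta_mx (x y a : A) : 'M[A]_2 := mx2 y (- a) 0 x.

(* Coker M (M : A^2 -> A^2 on column vectors) is isomorphic, as an A-module,
   to the ideal I of A: there is an A-linear map A^2 -> A whose image is
   exactly I and whose kernel is exactly the image of M (so that it induces
   an isomorphism Coker M = A^2 / im M ~= I). *)
Definition coker_isom_ideal (M : 'M[A]_2) (I : A -> Prop) : Prop :=
  exists f : 'cV[A]_2 -> A,
    [/\ (forall (r : A) (u v : 'cV[A]_2), f (r *: u + v) = r * f u + f v),
        (forall u, I (f u)),
        (forall w, I w -> exists u, f u = w) &
        (forall u, f u = 0 <-> exists v : 'cV[A]_2, u = M *m v)].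
End Defs.

(* Main.v *)
Require Import Defs.
From HB Require Import structures.
From mathcomp Require Import all_boot all_algebra.
From mathcomp Require Import ring.
Local Open Scope ring_scope.
Import GRing.Theory.

Definition cv2 {A : comUnitRingType} (u0 u1 : A) : 'cV[A]_2 :=
  \col_(i < 2) (if (i == 0 :> nat) then u0 else u1).

Lemma cv2_eta (A : comUnitRingType) (u : 'cV[A]_2) :
  u = cv2 (u 0 0) (u 1 0).
Proof.
apply/matrixP => i j; rewrite !mxE (ord1 j).
case: i => [[|[|k]]] Hk //=.
- by congr (u _ _); apply/val_inj.
- by congr (u _ _); apply/val_inj.
Qed.

Lemma mx2_mul (A : comUnitRingType) (p q s : A) (v : 'cV[A]_2) :
  mx2 p q 0 s *m v = cv2 (p * v 0 0 + q * v 1 0) (s * v 1 0).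
Proof.
apply/matrixP => i j; rewrite !mxE big_ord_recr big_ord_recr big_ord0 /= !mxE (ord1 j).
have -> : widen_ord (m:=2) (leqnSn 1) ord_max = 0 by apply/val_inj.
have -> : (ord_max : 'I_2) = 1 by apply/val_inj.
case: i => [[|[|k]]] Hk //=.
- by rewrite add0r.
- by rewrite add0r mul0r add0r.
Qed.

Section Gen.
Variable A : comUnitRingType.
Variables (p q s c d : A) (I : A -> Prop).
Hypotheses (Hp : c * p = 0) (Hqs : c * q + d * s = 0)
  (Him : forall u0 u1, I (c * u0 + d * u1))
  (Hsurj : forall w, I w -> exists u0 u1, c * u0 + d * u1 = w)
  (Hker : forall u0 u1, c * u0 + d * u1 = 0 ->
     exists v0 v1, u0 = p * v0 + q * v1 /\ u1 = s * v1).

Lemma gen_coker : coker_isom_ideal (mx2 p q 0 s) I.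
Proof.
exists (fun u => c * u 0 0 + d * u 1 0); split.
- by move=> r u v; rewrite !mxE; ring.
- by move=> u; apply: Him.
- move=> w /Hsurj [u0 [u1 <-]]; exists (cv2 u0 u1); by rewrite !mxE.
- move=> u; split.
  + move/Hker => [v0 [v1 [E0 E1]]]; exists (cv2 v0 v1).
    by rewrite mx2_mul {1}(@cv2_eta _ u) E0 E1 !mxE.
  + move=> [v ->]; rewrite mx2_mul !mxE /=.
    transitivity ((c * p) * v 0 0 + (c * q + d * s) * v 1 0); first by ring.
    by rewrite Hp Hqs !mul0r addr0.
Qed.
End Gen.

Theorem proposition3p8 (A : comUnitRingType) (x y a : A) :
  noetherian A -> local_ring A -> exact_pair x y ->
  (weakly_regular_mod a y -> coker_isom_ideal (gamma_mx x y a) (ideal2 y a)) /\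
  (weakly_regular_mod a x -> coker_isom_ideal (eta_mx x y a) (ideal2 x a)).
Proof.
move=> _ _ [_ _ Hx Hy].
have xy : x * y = 0 by apply/Hy; exists 1; rewrite mul1r.
split=> Hw.
- apply: (@gen_coker A x a y y (- a)).
  + by rewrite mulrC.
  + ring.
  + move=> u0 u1; exists u0, (- u1); ring.
  + move=> w [r [t ->]]; exists r, (- t); ring.
  + move=> u0 u1 E.
    have [r Hr] : pideal y u1.
      apply: Hw; exists u0.
      by apply/eqP; rewrite -subr_eq0 -oppr0 -E; apply/eqP; ring.
    have : (u0 - a * r) * y = 0.
      transitivity (y * u0 + - a * u1); last by rewrite E.
      rewrite Hr; ring.
    move/Hy => [t Ht]; exists t, r; split; last by rewrite mulrC.
    by rewrite -(subrK (a * r) u0) Ht; ring.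
- apply: (@gen_coker A y (- a) x x a).
  + exact: xy.
  + ring.
  + move=> u0 u1; exists u0, u1.
 ring.

  + move=> w [r [t ->]]; exists r, t. ring.
  + move=> u0 u1 E.
    have [r Hr] : pideal x u1.
      apply: Hw; exists (- u0).
      apply/eqP; rewrite -subr_eq0 -E; apply/eqP. ring.
    have : (u0 + a * r) * x = 0.
      transitivity (x * u0 + a * u1); last by rewrite E.
      rewrite Hr. ring.
    move/Hx => [t Ht]; exists t, r; split; last by rewrite mulrC.
    rewrite -(addrK (a * r) u0) Ht. ring.
Qed.
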